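(* Let $\mathcal O$ be a cyclic operad and $n\ge1$. Then $\psi_n\circ\phi_n = M_n$ as maps $\mathcal{OG}\to\mathcal{OG}$.
   Context: Work over $\mathbb R$. $\mathcal O$ is a cyclic operad; for $m\ge 2$, $\mathcal S[m]=(\bigoplus_L\mathcal O[m-1])_{\Sigma_m}$ is the space of $\mathcal O$-spiders with $m$ legs (sum over labelings $L$ of the legs of an $m$-star by $\{0,\dots,m-1\}$). An orientation of a graph (finite 1-dimensional CW complex) is an ordering of its vertices plus a direction on each edge, up to even numbers of vertex transpositions and edge reversals. An $\mathcal O$-graph is an oriented graph without univalent vertices whose vertices are colored by $\mathcal O$-spiders with legs identified with the incident half-edges; $\mathcal{OG}$ is spanned by $\mathcal O$-graphs modulo $(\mathbf X,or)=-(\mathbf X,-or)$ and linearity in each vertex coloring. Let $V_n=\mathbb R^{2n}$ with basis $B_n=\{p_1,\dots,p_n,q_1,\dots,q_n\}$ and standard symplectic form $\omega$ ($\omega(p_i,q_j)=\delta_{ij}=-\omega(q_j,p_i)$, others $0$). $\mathfrak a\mathcal O_n=\bigoplus_{m\ge2}(\mathcal S[m]\otimes V_n^{\otimes m})_{\Sigma_m}$, spanned by symplecto-spiders (spiders with a vector of $V_n$ on each leg). $\phi_n:\mathcal{OG}\to\wedge\mathfrak a\mathcal O_n$: fix a representative of the orientation of $\mathbf X$ (vertex order, edge directions). A state $s$ assigns an element of $B_n$ to each half-edge so that the two half-edges of each edge receive $p_i$ and $q_i$ for some $i$; the sign of an edge is $+1$ if its initial half-edge gets $p_i$ and $-1$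 if it gets $q_i$, and $\sigma(s)$ is the product of the edge signs. Cutting every edge at its midpoint gives symplecto-spiders $\mathbf s_1,\dots,\mathbf s_k$ indexed by the vertex order; $\mathbf X\{s\}=\mathbf s_1\wedge\cdots\wedge\mathbf s_k$ and $\phi_n(\mathbf X)=\sum_s\sigma(s)\mathbf X\{s\}$. $\psi_n:\wedge\mathfrak a\mathcal O_n\to\mathcal{OG}$: for a pairing $\pi$ of all legs of $\mathbf s_1,\dots,\mathbf s_k$, glue legs according to $\pi$ to get an $\mathcal O$-graph $(\mathbf s_1\wedge\cdots\wedge\mathbf s_k)^\pi$ with vertex $j$ colored by the spider of $\mathbf s_j$, vertices ordered $1,\dots,k$, and edges directed arbitrarily; the weight of an edge is $\omega(v_1,v_2)$ where $v_1,v_2$ are the vectors on its initial and terminal half-edges, and $w(\pi)$ is the product of the weights (the product $w(\pi)(\cdots)^\pi$ is independent of the edge directions). $\psi_n(\mathbf s_1\wedge\cdots\wedge\mathbf s_k)=\sum_\pi w(\pi)(\mathbf s_1\wedge\cdots\wedge\mathbf s_k)^\pi$. $M_n:\mathcal{OG}\to\mathcal{OG}$: for a pairing $\pi$ of the half-edges $H(X)$, $X^\pi$ is obtained by cutting all edges and regluing according to $\pi$. The union of the chord diagrams of $\pi$ and of the standard pairing $\{x,\bar x\}$ is a union $C(\pi)$ of circles with $c(\pi)$ components; choosing a representative orientation of $X$ whose edge directions are coherent around each circle, edges of $X^\pi$ get the induced directions and vertices keep their order, giving the $\mathcal O$-graph $\mathbf X^\pi$. $M_n(\mathbf X)=\sum_\pi(2n)^{c(\pi)}\mathbf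 X^\pi$. *)

(* Defs.v *)
From HB Require Import structures.
From mathcomp Require Import all_boot all_order all_algebra all_fingroup.
From mathcomp Require Import reals.
Set Implicit Arguments.
Unset Strict Implicit.
Unset Printing Implicit Defensive.
Import Order.TTheory GRing.Theory Num.Theory.
Local Open Scope ring_scope.

(* Cyclic Sigma-module underlying a cyclic operad O:                   *)
(*   Oc m = O((m)) = O[m-1], the space of operations with m "legs",    *)
Record cycSmod (R : pzRingType) := CycSmod {
  Oc : nat -> lmodType R;
  act : forall m, 'S_m -> Oc m -> Oc m;
  act_linear : forall m (s : 'S_m) (a : R) (x y : Oc m),
      act s (a *: x + y) = a *: act s x + act s y;
  act1 : forall m (x : Oc m), act 1 x = x;
  (* left action: (s o t) . x = s . (t . x); in mathcomp (t * s) = s o t *)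
  actM : forall m (s t : 'S_m) (x : Oc m), act (s * t) x = act t (act s x)
}.

Section Graphs.
Variable R : realType.
Variable O : cycSmod R.

(* action of a permutation of 'I_m on nat (identity outside [0,m)) *)
Definition pn m (s : 'S_m) (i : nat) : nat :=
  match (insub i : option 'I_m) with Some j => val (s j) | None => i end.

Definition natf N (p : {ffun 'I_N -> 'I_N}) (h : nat) : nat :=
  match (insub h : option 'I_N) with Some j => val (p j) | None => h end.

Definition is_pairing N (p : {ffun 'I_N -> 'I_N}) : bool :=
  [forall h, (p h != h) && (p (p h) == h)].

(* An oriented O-graph (with a chosen representative of its orientation):
   vertices 0..gk-1 (vertex order = natural order), half-edges 0..gh-1,
   gatt h = vertex of half-edge h, gmate = the other half of its edge,
   ginit h = h is the initial half-edge of its (directed) edge,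
   glab h = label of the leg of the spider at gatt h identified with h,
   gcol v = the O-operation (with deg v legs) colouring vertex v.          *)
Record gdat := GD {
  gk : nat;
  gh : nat;
  gatt : nat -> nat;
  gmate : nat -> nat;
  ginit : nat -> bool;
  glab : nat -> nat;
  gcol : nat -> {m : nat & Oc O m}
}.

Definition deg (X : gdat) (v : nat) : nat :=
  #|[pred h : 'I_(gh X) | gatt X h == v]|.

Definition wf (X : gdat) : Prop :=
  [/\ (forall h, (h < gh X)%N ->
         [/\ (gatt X h < gk X)%N, (gmate X h < gh X)%N, gmate X h != h,
             gmate X (gmate X h) = h & ginit X (gmate X h) = ~~ ginit X h]),
      (forall h, (h < gh X)%N -> (glab X h < deg X (gatt X h))%N),
      (forall h h', (h < gh X)%N -> (h' < gh X)%N ->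
         gatt X h = gatt X h' -> glab X h = glab X h' -> h = h') &
      (forall v, (v < gk X)%N -> (2 <= deg X v)%N /\ projT1 (gcol X v) = deg X v)].

Definition transported (X Y : gdat) (s : 'S_(gk X)) (t : 'S_(gh X)) : Prop :=
  [/\ gk Y = gk X, gh Y = gh X,
      (forall h, (h < gh X)%N ->
         [/\ gatt Y (pn t h) = pn s (gatt X h),
             gmate Y (pn t h) = pn t (gmate X h),
             ginit Y (pn t h) = ginit X h &
             glab Y (pn t h) = glab X h]) &
      (forall v, (v < gk X)%N -> gcol Y (pn s v) = gcol X v)].

Definition flipedge (X : gdat) (h0 : nat) : gdat :=
  GD (gk X) (gh X) (gatt X) (gmate X)
     (fun h => if (h == h0) || (h == gmate X h0) then ~~ ginit X h else ginit X h)
     (glab X) (gcol X).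

Definition setcol (X : gdat) (v : nat) (c : {m : nat & Oc O m}) : gdat :=
  GD (gk X) (gh X) (gatt X) (gmate X) (ginit X) (glab X)
     (fun u => if u == v then c else gcol X u).

Definition relab (X : gdat) (v : nat) (s : 'S_(deg X v)) (o : Oc O (deg X v)) : gdat :=
  GD (gk X) (gh X) (gatt X) (gmate X) (ginit X)
     (fun h => if gatt X h == v then pn s (glab X h) else glab X h)
     (fun u => if u == v then existT _ (deg X v) o else gcol X u).

(* F : gdat -> W induces a (linear) map on OG, i.e. its linear extension
   kills all defining relations of OG:
   isomorphism / vertex-order sign, edge-reversal sign, multilinearity in
   vertex colourings, and the Sigma_m-coinvariance of spider colourings. *)
Record respects (W : lmodType R) (F : gdat -> W) : Prop := Respects {
  resp_iso : forall X Y s t, wf X -> wf Y -> @transported X Y s t ->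
      F Y = (-1) ^+ odd_perm s *: F X;
  resp_flip : forall X h0, wf X -> (h0 < gh X)%N -> F (flipedge X h0) = - F X;
  resp_lin : forall X v m (o1 o2 : Oc O m) (a b : R), (v < gk X)%N ->
      wf (setcol X v (existT _ m o1)) ->
      F (setcol X v (existT _ m (a *: o1 + b *: o2))) =
        a *: F (setcol X v (existT _ m o1)) + b *: F (setcol X v (existT _ m o2));
  resp_coinv : forall X v (s : 'S_(deg X v)) (o : Oc O (deg X v)), wf X ->
      (v < gk X)%N -> gcol X v = existT _ (deg X v) o ->
      F (@relab X v s (act s o)) = F X
}.

Variable n : nat.
Definition Vn := 'rV[R]_(n + n).
(* p_i = e_(lshift n i), q_i = e_(rshift n i) *)
Definition omega (u v : Vn) : R :=
  \sum_(i < n) (u 0 (lshift n i) * v 0 (rshift n i) - u 0 (rshift n i) * v 0 (lshift n i)).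
(* basis element: (i, false) = p_i, (i, true) = q_i *)
Definition bvec (b : 'I_n * bool) : Vn :=
  delta_mx 0 (if b.2 then rshift n b.1 else lshift n b.1).

(* symplecto-spider: an O-operation with sm legs, vector sv l on leg l *)
Record sspider := SS { sm : nat; so : Oc O sm; sv : nat -> Vn }.
Definition dflt : sspider := SS (0 : Oc O 0) (fun _ => 0).

Fixpoint leg_of (w : seq sspider) (h : nat) : nat * nat :=
  match w with
  | [::] => (0%N, h)
  | s :: w' => if (h < sm s)%N then (0%N, h)
               else let jl := leg_of w' (h - sm s) in (jl.1.+1, jl.2)
  end.
Definition nlegs (w : seq sspider) : nat := sumn [seq sm s | s <- w].
Definition legvec (w : seq sspider) (h : nat) : Vn :=
  sv (nth dflt w (leg_of w h).1) (leg_of w h).2.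

Definition glue (w : seq sspider) (p : {ffun 'I_(nlegs w) -> 'I_(nlegs w)}) : gdat :=
  GD (size w) (nlegs w) (fun h => (leg_of w h).1) (natf p)
     (fun h => (h < natf p h)%N) (fun h => (leg_of w h).2)
     (fun j => existT _ (sm (nth dflt w j)) (so (nth dflt w j))).

Definition weight (w : seq sspider) (p : {ffun 'I_(nlegs w) -> 'I_(nlegs w)}) : R :=
  \prod_(h < nlegs w | (h < p h)%N) omega (legvec w h) (legvec w (p h)).

(* psi_n on a wedge word, followed by the map OG -> W induced by F *)
Definition psi_n (W : lmodType R) (F : gdat -> W) (w : seq sspider) : W :=
  \sum_(p : {ffun 'I_(nlegs w) -> 'I_(nlegs w)} | is_pairing p)
     weight p *: F (glue p).

Definition mateo (X : gdat) (h : 'I_(gh X)) : 'I_(gh X) := insubd h (gmate X h).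

Definition is_state (X : gdat) (s : {ffun 'I_(gh X) -> 'I_n * bool}) : bool :=
  [forall h, ((s (mateo h)).1 == (s h).1) && ((s (mateo h)).2 == ~~ (s h).2)].

Definition stsign (X : gdat) (s : {ffun 'I_(gh X) -> 'I_n * bool}) : R :=
  \prod_(h : 'I_(gh X) | ginit X h) (if (s h).2 then -1 else 1).

Definition cut (X : gdat) (s : {ffun 'I_(gh X) -> 'I_n * bool}) : seq sspider :=
  [seq SS (projT2 (gcol X v))
       (fun l => \sum_(h : 'I_(gh X) | (gatt X h == v) && (glab X h == l)) bvec (s h))
   | v <- iota 0 (gk X)].

Definition psi_phi (W : lmodType R) (F : gdat -> W) (X : gdat) : W :=
  \sum_(s : {ffun 'I_(gh X) -> 'I_n * bool} | is_state s) stsign s *: psi_n F (cut s).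

Definition ncirc (X : gdat) (p : {ffun 'I_(gh X) -> 'I_(gh X)}) : nat :=
  n_comp (fun h h' : 'I_(gh X) => (h' == mateo h) || (h' == p h)) 'I_(gh X).

(* d h = h is initial in a representative orientation of X whose edge
   directions are coherent around each circle of C(pi)                *)
Definition coherent (X : gdat) (p : {ffun 'I_(gh X) -> 'I_(gh X)})
  (d : {ffun 'I_(gh X) -> bool}) : bool :=
  [forall h, (d (mateo h) == ~~ d h) && (d (p h) == ~~ d h)].

(* sign relating that representative to the given one *)
Definition flipsign (X : gdat) (d : {ffun 'I_(gh X) -> bool}) : R :=
  (-1) ^+ #|[pred h : 'I_(gh X) | ginit X h && ~~ d h]|.

(* X^pi with induced orientation: new edges directed from the half-edge
   that is initial in the coherent representative                      *)
Definition reglue (X : gdat) (p : {ffun 'I_(gh X) -> 'I_(gh X)})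
  (d : {ffun 'I_(gh X) -> bool}) : gdat :=
  GD (gk X) (gh X) (gatt X) (natf p)
     (fun h => match (insub h : option 'I_(gh X)) with Some j => d j | None => ginit X h end)
     (glab X) (gcol X).

Definition M_n (W : lmodType R) (F : gdat -> W) (X : gdat) : W :=
  \sum_(p : {ffun 'I_(gh X) -> 'I_(gh X)} | is_pairing p)
    match [pick d | coherent p d] with
    | Some d => ((2 * n)%:R ^+ ncirc p * flipsign d) *: F (reglue p d)
    | None => 0
    end.

End Graphs.

(* Main.v *)
Require Import Defs.
From HB Require Import structures.
From mathcomp Require Import all_boot all_order all_algebra all_fingroup.
From mathcomp Require Import reals.
From mathcomp Require Import zify.
Set Implicit Arguments.
Unset Strict Implicit.
Unset Printing Implicit Defensive.
Import Order.TTheory GRing.Theory Num.Theory.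
Local Open Scope ring_scope.



Lemma cardE' (T : finType) (P : pred T) : #|P| = (\sum_(x : T) (P x : nat))%N.
Proof. rewrite -sum1_card big_mkcond; apply: eq_bigr => i _; rewrite unfold_in; by case: (P i). Qed.

Lemma half (T : finType) (f : T -> T) (finv : involutive f) (A G : pred T)
  (HA : forall h, A (f h) = ~~ A h) (HG : forall h, G (f h) = G h) :
  (#|[pred h | A h && G h]| * 2 = #|G|)%N.
Proof.
rewrite !cardE' muln2 -addnn.
have -> : (\sum_x (G x : nat) = \sum_x ((A x && G x) : nat) + \sum_x ((~~ A x && G x) : nat))%N.
  by rewrite -big_split; apply: eq_bigr => x _ /=; case: (A x); case: (G x).
congr (_ + _)%N; rewrite (reindex_inj (inv_inj finv)) /=.
by apply: eq_bigr => x _; rewrite HA HG.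
Qed.

Lemma cardsplit (T : finType) (A B : pred T) :
  (#|[pred h | A h && B h]| + #|[pred h | A h && ~~ B h]| = #|A|)%N.
Proof.
rewrite !cardE' -big_split; apply: eq_bigr => x _ /=; by case: (A x); case: (B x).
Qed.

Section Scal.
Variables (R : realType) (n : nat).

Definition sg (b : bool) : R := if b then -1 else 1.

Lemma sgE b : sg b = (-1) ^+ b. Proof. by case: b; rewrite ?expr1 ?expr0. Qed.

Lemma prod_sg (T : finType) (P x : pred T) :
  \prod_(h | P h) sg (x h) = (-1) ^+ #|[pred h | P h && x h]|.
Proof.
under eq_bigr => h _ do rewrite sgE.
rewrite prodrXr cardE' big_mkcond /=; congr (_ ^+ _).
by apply: eq_bigr => h _; case: (P h).
Qed.

Lemma omega_bvec (x y : 'I_n * bool) :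
  omega (bvec R x) (bvec R y) =
  if (y.1 == x.1) && (y.2 == ~~ x.2) then sg x.2 else 0.
Proof.
have ll : forall i k : 'I_n, (delta_mx 0 (lshift n i) : 'M[R]_(1, n + n)) 0 (lshift n k) = (k == i)%:R.
  by move=> i k; rewrite mxE eqxx eq_lshift.
have rr : forall i k : 'I_n, (delta_mx 0 (rshift n i) : 'M[R]_(1, n + n)) 0 (rshift n k) = (k == i)%:R.
  by move=> i k; rewrite mxE eqxx eq_rshift.
have lr : forall i k : 'I_n, (delta_mx 0 (lshift n i) : 'M[R]_(1, n + n)) 0 (rshift n k) = 0.
  by move=> i k; rewrite mxE eqxx eq_rlshift.
have rl : forall i k : 'I_n, (delta_mx 0 (rshift n i) : 'M[R]_(1, n + n)) 0 (lshift n k) = 0.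
  by move=> i k; rewrite mxE eqxx eq_lrshift.
have S : forall i j : 'I_n, \sum_(k < n) ((k == i)%:R * (k == j)%:R : R) = (j == i)%:R.
  move=> i j; rewrite (bigD1 i) //= eqxx mul1r big1 ?addr0 ?(eq_sym j) //.
  by move=> k /negPf ->; rewrite mul0r.
case: x => i a; case: y => j b; rewrite /omega /bvec /=.
case: a; case: b => /=; rewrite ?andbF ?andbT.
- by rewrite big1 // => k _; rewrite rl rl mulr0 mul0r subrr.
- under eq_bigr => k _ do rewrite rl lr mul0r sub0r rr ll.
  by rewrite sumrN S /sg; case: (j == i); rewrite ?oppr0.
- under eq_bigr => k _ do rewrite lr rl mul0r subr0 rr ll.
  by rewrite S /sg; case: (j == i).
- by rewrite big1 // => k _; rewrite lr lr mulr0 mul0r subrr.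
Qed.

Variables (N : nat) (m q : 'I_N -> 'I_N) (I o : pred 'I_N).
Hypotheses (mK : involutive m) (qK : involutive q)
  (Im : forall h, I (m h) = ~~ I h) (oq : forall h, o (q h) = ~~ o h).

Definition stP (s : {ffun 'I_N -> 'I_n * bool}) :=
  [forall h, ((s (m h)).1 == (s h).1) && ((s (m h)).2 == ~~ (s h).2)].
Definition vaP (s : {ffun 'I_N -> 'I_n * bool}) :=
  [forall h, ((s (q h)).1 == (s h).1) && ((s (q h)).2 == ~~ (s h).2)].

Definition summand (s : {ffun 'I_N -> 'I_n * bool}) : R :=
  (\prod_(h | I h) sg (s h).2) *
   \prod_(h | o h) omega (bvec R (s h)) (bvec R (s (q h))).

Lemma prod_if (P c : pred 'I_N) (a : 'I_N -> R) :
  \prod_(h | P h) (if c h then a h else 0) =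
  if [forall h, P h ==> c h] then \prod_(h | P h) a h else 0.
Proof.
case: ifP => [/forallP H|/negbT/forallPn [h]].
  by apply: eq_bigr => h Ph; move: (H h); rewrite Ph /= => ->.
rewrite negb_imply => /andP [Ph nc].
by rewrite (bigD1 h) //= (negbTE nc) mul0r.
Qed.

Lemma summandE s : summand s =
  if vaP s then (\prod_(h | I h) sg (s h).2) * \prod_(h | o h) sg (s h).2 else 0.
Proof.
rewrite /summand (eq_bigr _ (fun h _ => omega_bvec _ _)).
rewrite prod_if.
have -> : [forall h, o h ==> ((s (q h)).1 == (s h).1) && ((s (q h)).2 == ~~ (s h).2)] = vaP s.
  apply/forallP/forallP => H h; last by rewrite H implybT.
  case oh: (o h); first by move: (H h); rewrite oh.
  move: (H (q h)); rewrite oq oh /= qK => /andP [/eqP e1 /eqP e2].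
  by rewrite e1 e2 negbK !eqxx.
by case: (vaP s); rewrite ?mulr0.
Qed.


Lemma scal_zero :
  (forall dd : {ffun 'I_N -> bool},
     ~~ [forall h, (dd (m h) == ~~ dd h) && (dd (q h) == ~~ dd h)]) ->
  \sum_(s | stP s) summand s = 0.
Proof.
move=> H; apply: big1 => s Hs; rewrite summandE; case: ifP => // Hv.
case/negP: (H [ffun h => (s h).2]); apply/forallP => h; rewrite !ffunE.
move/forallP: Hs => /(_ h) /andP [_ ->]; by move/forallP: Hv => /(_ h) /andP [_ ->].
Qed.

Variable d : 'I_N -> bool.
Hypotheses (dm : forall h, d (m h) = ~~ d h) (dq : forall h, d (q h) = ~~ d h).

Definition phi (g : {ffun 'I_N -> 'I_n * bool}) : {ffun 'I_N -> 'I_n * bool} :=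
  [ffun h => ((g h).1, (g h).2 (+) d h)].

Lemma phiK : involutive phi.
Proof. by move=> g; apply/ffunP => h; rewrite !ffunE /= addbK; case: (g h). Qed.

Definition constP (g : {ffun 'I_N -> 'I_n * bool}) :=
  [forall h, (g (m h) == g h) && (g (q h) == g h)].

Lemma pt_eq (x y : 'I_n * bool) (b : bool) :
  (((y.1, y.2 (+) ~~ b).1 == (x.1, x.2 (+) b).1) &&
   ((y.1, y.2 (+) ~~ b).2 == ~~ (x.1, x.2 (+) b).2)) = (y == x).
Proof.
case: x => a1 a2; case: y => b1 b2; rewrite xpair_eqE /=.
by case: a2; case: b2; case: b.
Qed.

Lemma stva_phi g : stP (phi g) && vaP (phi g) = constP g.
Proof.
rewrite /stP /vaP /constP.
have E1 : forall h, ((phi g (m h)).1 == (phi g h).1) && ((phi g (m h)).2 == ~~ (phi g h).2)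
   = (g (m h) == g h) by move=> h; rewrite !ffunE dm pt_eq.
have E2 : forall h, ((phi g (q h)).1 == (phi g h).1) && ((phi g (q h)).2 == ~~ (phi g h).2)
   = (g (q h) == g h) by move=> h; rewrite !ffunE dq pt_eq.
apply/andP/forallP => [[/forallP H1 /forallP H2] h|H]; first by rewrite -E1 -E2 H1 H2.
by split; apply/forallP => h; rewrite ?E1 ?E2; case/andP: (H h).
Qed.

Definition erel := fun h h' : 'I_N => (h' == m h) || (h' == q h).

Lemma erel_sym : connect_sym erel.
Proof.
apply: sym_connect_sym => x y; rewrite /erel.
by rewrite [y == m x]eq_sym [y == q x]eq_sym (inv_eq mK) (inv_eq qK).
Qed.

Lemma const_root g : constP g -> forall x, g (fingraph.root erel x) = g x.
Proof.
move=> /forallP H x.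
have cl : closed erel [pred y | g y == g x].
  move=> y z /orP [] /eqP ->; rewrite !inE; case/andP: (H y) => /eqP E1 /eqP E2; by rewrite ?E1 ?E2.
have := closed_connect cl (connect_root erel x); rewrite !inE eqxx => /esym.
by move/eqP.
Qed.

Definition Sr := {x : 'I_N | fingraph.root erel x == x}.

Lemma card_Sr : #|{: Sr}| = n_comp erel 'I_N.
Proof.
rewrite card_sig; apply: eq_card => x; by rewrite !inE andbT.
Qed.

Definition rt (x : 'I_N) : Sr := exist _ (fingraph.root erel x) (roots_root erel_sym x).

Lemma card_const : #|[pred g | constP g]| = (#|{: 'I_n * bool}| ^ n_comp erel 'I_N)%N.
Proof.
rewrite -card_Sr -card_ffun -!sum1_card.
pose h1 (u : {ffun Sr -> 'I_n * bool}) : {ffun 'I_N -> 'I_n * bool} := [ffun x => u (rt x)].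
pose h2 (g : {ffun 'I_N -> 'I_n * bool}) : {ffun Sr -> 'I_n * bool} := [ffun r => g (val r)].
rewrite (reindex_onto h1 h2) /=; last first.
  move=> g; rewrite inE => Hg; apply/ffunP => x; rewrite !ffunE /=.
  exact: const_root.
apply: eq_bigl => u; rewrite !inE.
have -> : h2 (h1 u) == u.
  apply/eqP/ffunP => r; rewrite !ffunE; congr (u _); apply: val_inj => /=.
  by case: r => r /= /eqP.
rewrite andbT; apply/forallP => x; rewrite !ffunE.
have rE : forall y, erel x y -> rt y = rt x.
  move=> y Hy; apply: val_inj => /=; apply/esym/eqP; rewrite (root_connect erel_sym).
  exact: connect1.
by rewrite !rE ?eqxx // /erel eqxx ?orbT.
Qed.


Lemma sg_add x y : sg (x (+) y) = sg x * sg y.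
Proof. by case: x; case: y; rewrite /sg /= ?mulN1r ?mulr1 ?mul1r ?opprK. Qed.

Lemma summand_const g : constP g ->
  summand (phi g) = (-1) ^+ #|[pred h | I h && ~~ d h]| * (-1) ^+ #|[pred h | o h && ~~ d h]|.
Proof.
move=> Hg; rewrite summandE.
have -> : vaP (phi g) by move: (stva_phi g); rewrite Hg => /andP[].
under eq_bigr => h _ do rewrite ffunE /= sg_add.
under [X in _ * X]eq_bigr => h _ do rewrite ffunE /= sg_add.
rewrite !big_split /= !prod_sg.
have gm : forall h, (g (m h)).2 = (g h).2.
  by move=> h; move/forallP: Hg => /(_ h) /andP [/eqP -> _].
have gq : forall h, (g (q h)).2 = (g h).2.
  by move=> h; move/forallP: Hg => /(_ h) /andP [_ /eqP ->].
have H1 := half mK Im (G := fun h => (g h).2) gm.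
have H2 := half qK oq (G := fun h => (g h).2) gq.
have -> : #|[pred h | I h && (g h).2]| = #|[pred h | o h && (g h).2]|.
  by apply/eqP; rewrite -(eqn_pmul2r (_ : 0 < 2)%N) // H1 H2.
have K1 := half mK Im (G := xpredT) (fun h => erefl).
have K2 := half qK oq (G := xpredT) (fun h => erefl).
have S1 := cardsplit I d.
have S2 := cardsplit o d.
have EI : #|[pred h | I h && true]| = #|I| by apply: eq_card => h; rewrite !inE andbT.
have EO : #|[pred h | o h && true]| = #|o| by apply: eq_card => h; rewrite !inE andbT.
rewrite EI in K1; rewrite EO in K2.
move: S1 S2 K1 K2.
set a := #|[pred h | o h && (g h).2]|.
set a1 := #|[pred h | I h && d h]|.
set a2 := #|[pred h | I h && ~~ d h]|.
set b1 := #|[pred h | o h && d h]|.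
set b2 := #|[pred h | o h && ~~ d h]|.
move=> S1 S2 K1 K2.
have Hodd : odd (a1 + b1 + (a2 + b2)) = false.
  have -> : (a1 + b1 + (a2 + b2) = #|I| + #|I|)%N.
    have : (#|I| = #|o|)%N by apply/eqP; rewrite -(eqn_pmul2r (_ : 0 < 2)%N) // K1 K2.
    by move=> HH; rewrite addnACA S1 S2 HH.
  by rewrite addnn odd_double.
rewrite mulrACA -(exprD _ a a) addnn -(signr_odd _ a.*2) odd_double expr0 mul1r -exprD.
rewrite -(exprD _ a1 b1) -(signr_odd _ (a1 + b1)) -(signr_odd _ (a2 + b2)); congr (_ ^+ _).
move: Hodd; rewrite oddD; by case: (odd (a1 + b1)); case: (odd (a2 + b2)).
Qed.

Lemma scal_sum :
  \sum_(s | stP s) summand s =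
  ((2 * n)%N%:R ^+ n_comp erel 'I_N) *
  ((-1) ^+ #|[pred h | I h && ~~ d h]| * (-1) ^+ #|[pred h | o h && ~~ d h]|).
Proof.
rewrite (bigID vaP) /= [X in _ + X]big1 ?addr0; last first.
  by move=> s /andP [_ /negbTE]; rewrite summandE => ->.
rewrite (reindex_inj (inv_inj phiK)) /=.
under eq_bigl => g do rewrite stva_phi.
under eq_bigr => g Hg do rewrite summand_const //.
rewrite sumr_const card_const card_prod card_ord card_bool -[LHS]mulr_natl natrX mulnC.
by [].
Qed.

End Scal.



Lemma pnE m (s : 'S_m) (i : 'I_m) : pn s i = s i.
Proof. by rewrite /pn valK. Qed.

Lemma pnO m (s : 'S_m) i : (m <= i)%N -> pn s i = i.
Proof. by move=> H; rewrite /pn insubF // ltnNge H. Qed.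

Lemma pn_lt m (s : 'S_m) i : (i < m)%N -> (pn s i < m)%N.
Proof. by move=> H; rewrite -[i]/(nat_of_ord (Ordinal H)) pnE. Qed.

Lemma pn1 m i : pn (1 : 'S_m) i = i.
Proof.
case: (ltnP i m) => H; last by rewrite pnO.
by rewrite -[i]/(nat_of_ord (Ordinal H)) pnE perm1.
Qed.

Lemma pn_inj m (s : 'S_m) i j : (i < m)%N -> (j < m)%N -> pn s i = pn s j -> i = j.
Proof.
move=> Hi Hj; rewrite -[i]/(nat_of_ord (Ordinal Hi)) -[j]/(nat_of_ord (Ordinal Hj)) !pnE.
by move/val_inj/perm_inj => [].
Qed.

Lemma pn_surj m (s : 'S_m) j : (j < m)%N -> exists2 i, (i < m)%N & j = pn s i.
Proof.
move=> Hj; exists (s^-1%g (Ordinal Hj)) => //.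
by rewrite pnE permKV.
Qed.

Lemma natfE N (p : {ffun 'I_N -> 'I_N}) (i : 'I_N) : natf p i = p i.
Proof. by rewrite /natf valK. Qed.

Lemma natf_lt N (p : {ffun 'I_N -> 'I_N}) i : (i < N)%N -> (natf p i < N)%N.
Proof. by move=> H; rewrite -[i]/(nat_of_ord (Ordinal H)) natfE. Qed.

Lemma card_count k (P : pred nat) : #|[pred h : 'I_k | P h]| = count P (iota 0 k).
Proof.
rewrite cardE' -sum1_count -(big_mkord xpredT (fun h => (P h : nat))).
by rewrite /index_iota subn0 [RHS]big_mkcond; apply: eq_bigr => i _; case: (P i).
Qed.

Section Gen.
Variables (R : realType) (O : cycSmod R).

Lemma degE (Y : gdat O) v : deg Y v = count (fun h => gatt Y h == v) (iota 0 (gh Y)).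
Proof. exact: card_count. Qed.

Lemma perm_iota m (t : 'S_m) : perm_eq (iota 0 m) (map (pn t) (iota 0 m)).
Proof.
apply: uniq_perm; first exact: iota_uniq.
  rewrite map_inj_in_uniq ?iota_uniq // => i j; rewrite !mem_iota /= => Hi Hj.
  exact: pn_inj.
move=> j; rewrite mem_iota /=; apply/idP/mapP => [Hj|[i]].
  by have [i Hi ->] := pn_surj t Hj; exists i; rewrite // mem_iota.
by rewrite mem_iota /= => Hi ->; apply: pn_lt.
Qed.

Lemma deg_transp (X Y : gdat O) s t : wf X -> @transported _ _ X Y s t ->
  forall v, (v < gk X)%N -> deg Y (pn s v) = deg X v.
Proof.
move=> [W1 _ _ _] [ek eh H1 H2] v Hv; rewrite !degE eh.
rewrite (seq.permP (perm_iota t)) count_map; apply: eq_in_count => h.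
rewrite mem_iota /= => Hh; rewrite /preim /=.
have [-> _ _ _] := H1 h Hh.
have [Ha _ _ _ _] := W1 h Hh.
by apply/eqP/eqP => [|->] //; apply: pn_inj.
Qed.


Lemma wf_transp (X Y : gdat O) s t : wf X -> @transported _ _ X Y s t -> wf Y.
Proof.
move=> wX tr; have Hd := deg_transp wX tr.
case: wX => W1 W2 W3 W4; case: tr => ek eh H1 H2.
split.
- move=> h'; rewrite eh => Hh'; have [h Hh ->] := pn_surj t Hh'.
  have [a1 a2 a3 a4 a5] := W1 h Hh; have [b1 b2 b3 b4] := H1 h Hh.
  have [c1 c2 c3 c4] := H1 _ a2.
  split.
  + by rewrite b1 ek; apply: pn_lt.
  + by rewrite b2; apply: pn_lt.
  + rewrite b2; apply/eqP => E; move: (pn_inj a2 Hh E) => E'.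
    by rewrite E' eqxx in a3.
  + by rewrite b2 c2 a4.
  + by rewrite b2 c3 a5 b3.
- move=> h'; rewrite eh => Hh'; have [h Hh ->] := pn_surj t Hh'.
  have [b1 _ _ b4] := H1 h Hh; have [a1 _ _ _ _] := W1 h Hh.
  by rewrite b4 b1 Hd //; apply: W2.
- move=> h1' h2'; rewrite eh => Hh1' Hh2'.
  have [h1 Hh1 ->] := pn_surj t Hh1'; have [h2 Hh2 ->] := pn_surj t Hh2'.
  have [b1 _ _ b4] := H1 h1 Hh1; have [c1 _ _ c4] := H1 h2 Hh2.
  have [a1 _ _ _ _] := W1 h1 Hh1; have [d1 _ _ _ _] := W1 h2 Hh2.
  rewrite b1 c1 b4 c4 => /(pn_inj a1 d1) E1 E2.
  by rewrite (W3 h1 h2 Hh1 Hh2 E1 E2).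
- move=> v'; rewrite ek => Hv'; have [v Hv ->] := pn_surj s Hv'.
  by rewrite Hd // H2 //; apply: W4.
Qed.

Lemma wf_flip (Y : gdat O) (h0 : nat) : wf Y -> (h0 < gh Y)%N -> wf (flipedge Y h0).
Proof.
case=> W1 W2 W3 W4 H0; split => //=.
move=> h Hh; have [a1 a2 a3 a4 a5] := W1 h Hh; split => //.
have [b1 b2 b3 b4 b5] := W1 h0 H0.
have -> : (gmate Y h == h0) || (gmate Y h == gmate Y h0) = (h == h0) || (h == gmate Y h0).
  rewrite orbC; congr (_ || _); apply/eqP/eqP => E.
  - by rewrite -a4 E b4.
  - by rewrite E.
  - by rewrite -a4 E.
  - by rewrite E b4.
by rewrite a5; case: ifP.
Qed.

Definition setinit (Y : gdat O) (ini : nat -> bool) : gdat O :=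
  GD (gk Y) (gh Y) (gatt Y) (gmate Y) ini (glab Y) (gcol Y).

Variables (W : lmodType R) (F : gdat O -> W).
Hypothesis respF : respects F.

Lemma flip_many k : forall (Y : gdat O) ini, wf Y -> wf (setinit Y ini) ->
  #|[pred h : 'I_(gh Y) | ginit Y h && ~~ ini h]| = k ->
  F (setinit Y ini) = (-1) ^+ k *: F Y.
Proof.
elim: k => [|k IH] Y ini wY wY'.
  move/card0_eq => H0.
  have E : forall h, (h < gh Y)%N -> ini h = ginit Y h.
    move=> h Hh; have := H0 (Ordinal Hh); rewrite !inE /=.
    case gi: (ginit Y h) => /=; first by case: (ini h).
    move=> _; apply/negP => ih.
    case: wY => W1 _ _ _; case: wY' => V1 _ _ _.
    have [a1 a2 a3 a4 a5] := W1 h Hh; have [_ _ _ _ c5] := V1 h Hh.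
    have := H0 (Ordinal a2); rewrite !inE /= a5 gi /=.
    by move: c5; rewrite /= ih => ->.
  rewrite (resp_iso respF (s := 1) (t := 1) wY wY') ?odd_perm1 ?expr0 ?scale1r //.
  split => // [h Hh|v Hv]; rewrite ?pn1 //; split => //=.
  exact: E.
move=> Hc.
have [h0 Hh0] : exists h0, h0 \in [pred h : 'I_(gh Y) | ginit Y h && ~~ ini h].
  by apply/card_gt0P; rewrite Hc.
have wY1 := wf_flip wY (ltn_ord h0).
have := IH (flipedge Y h0) ini wY1 wY'.
rewrite (resp_flip respF wY (ltn_ord h0)) => ->; last first.
  apply/eqP; rewrite -eqSS -Hc (cardD1 h0 [pred h : 'I_(gh Y) | ginit Y h && ~~ ini h]) Hh0 /= add1n eqSS; apply/eqP.
  apply: eq_card => h; rewrite !inE /=.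
  move: Hh0; rewrite !inE => /andP [g0 i0].
  case: wY => W1 _ _ _; case: wY' => V1 _ _ _.
  have [a1 a2 a3 a4 a5] := W1 h0 (ltn_ord h0); have [_ _ _ _ c5] := V1 h0 (ltn_ord h0).
  case: (eqVneq h h0) => [->|ne]; first by rewrite eqxx /= g0.
  have ne' : (nat_of_ord h == nat_of_ord h0) = false by apply/negbTE.
  rewrite ne' /=; case: eqP => [->|_] //.
  by rewrite a5 g0 /=; move: c5 => /= ->; rewrite negbK (negbTE i0).
by rewrite scalerN exprS mulN1r scaleNr.
Qed.

End Gen.



Fixpoint legof (ss : seq nat) (h : nat) : nat * nat :=
  match ss with
  | [::] => (0%N, h)
  | k :: ss' => if (h < k)%N then (0%N, h)
               else let jl := legof ss' (h - k) in (jl.1.+1, jl.2)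
  end.

Lemma legof_pos ss j l : (j < size ss)%N -> (l < nth 0%N ss j)%N ->
  legof ss (sumn (take j ss) + l) = (j, l).
Proof.
elim: ss j => [|k ss IH] [|j] //= Hj Hl; first by rewrite Hl.
by rewrite -addnA ltnNge leq_addr /= addKn IH.
Qed.

Lemma sumb_count (T : Type) (s : seq T) (P : pred T) :
  (\sum_(x <- s) (P x : nat))%N = count P s.
Proof. by rewrite -sum1_count [RHS]big_mkcond; apply: eq_bigr => x _; case: (P x). Qed.

Section Main.
Variables (R : realType) (O : cycSmod R) (n : nat) (X : gdat O).
Hypothesis wfX : wf X.
Local Notation N := (gh X).

Lemma leg_ofE (w : seq (sspider O n)) h : leg_of w h = legof (map (@sm _ _ _) w) h.
Proof. by elim: w h => //= s w IH h; rewrite IH. Qed.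

Definition ss0 := [seq deg X v | v <- iota 0 (gk X)].

Lemma sumn_ss0 : sumn ss0 = N.
Proof.
rewrite sumnE big_map.
under eq_bigr => v _ do rewrite degE -sumb_count.
rewrite exchange_big /= -[RHS](size_iota 0 N) -sum1_size.
apply: eq_big_seq => h; rewrite mem_iota /= => Hh.
case: wfX => W1 _ _ _; have [a1 _ _ _ _] := W1 h Hh.
rewrite sumb_count (eq_count (a2 := pred1 (gatt X h))); last by move=> v; rewrite /= eq_sym.
by rewrite count_uniq_mem ?iota_uniq // mem_iota /= add0n a1.
Qed.

Lemma ss0_nth v : (v < gk X)%N -> nth 0%N ss0 v = deg X v.
Proof. by move=> Hv; rewrite (nth_map 0%N) ?size_iota // nth_iota. Qed.

Definition ell h := (sumn (take (gatt X h) ss0) + glab X h)%N.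

Lemma legX h : (h < N)%N -> legof ss0 (ell h) = (gatt X h, glab X h).
Proof.
move=> Hh; case: wfX => W1 W2 _ _; have [a1 _ _ _ _] := W1 h Hh.
by apply: legof_pos; rewrite ?size_map ?size_iota ?ss0_nth //; apply: W2.
Qed.

Lemma ell_lt h : (h < N)%N -> (ell h < N)%N.
Proof.
move=> Hh; case: wfX => W1 W2 _ _; have [a1 _ _ _ _] := W1 h Hh.
have := congr1 sumn (cat_take_drop (gatt X h) ss0).
rewrite sumn_cat (drop_nth 0%N) ?size_map ?size_iota // /= ss0_nth // sumn_ss0.
have := W2 h Hh; rewrite /ell; lia.
Qed.

Lemma ell_inj h1 h2 : (h1 < N)%N -> (h2 < N)%N -> ell h1 = ell h2 -> h1 = h2.
Proof.
move=> H1 H2 E; have := legX H1; rewrite E legX // => -[E1 E2].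
by case: wfX => _ _ W3 _; apply: W3.
Qed.

Definition ello (h : 'I_N) : 'I_N := Ordinal (ell_lt (ltn_ord h)).

Lemma ello_inj : injective ello.
Proof. by move=> h1 h2 /(congr1 val) /= /ell_inj E; apply: val_inj; apply: E. Qed.

Definition tau : 'S_N := perm ello_inj.

Lemma tauE (h : 'I_N) : nat_of_ord (tau h) = ell h.
Proof. by rewrite permE. Qed.

Lemma pn_tau h : (h < N)%N -> pn tau h = ell h.
Proof. by move=> H; rewrite -[h]/(nat_of_ord (Ordinal H)) pnE tauE. Qed.


Lemma map_sm_cut (s : {ffun 'I_N -> 'I_n * bool}) : map (@sm _ _ _) (cut s) = ss0.
Proof.
rewrite /cut -map_comp; apply/eq_in_map => v; rewrite mem_iota /= => Hv.
by case: wfX => _ _ _ W4; case: (W4 v Hv).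
Qed.

Lemma nlegs_cut (s : {ffun 'I_N -> 'I_n * bool}) : nlegs (cut s) = N.
Proof. by rewrite /nlegs map_sm_cut sumn_ss0. Qed.

Lemma leg_cut (s : {ffun 'I_N -> 'I_n * bool}) h : (h < N)%N ->
  leg_of (cut s) (ell h) = (gatt X h, glab X h).
Proof. by move=> Hh; rewrite leg_ofE map_sm_cut legX. Qed.

Lemma legvec_cut (s : {ffun 'I_N -> 'I_n * bool}) (h : 'I_N) :
  legvec (cut s) (ell h) = bvec R (s h).
Proof.
rewrite /legvec leg_cut //=.
case: wfX => W1 _ W3 _; have [a1 _ _ _ _] := W1 h (ltn_ord h).
rewrite /cut (nth_map 0%N) ?size_iota // nth_iota //=.
apply: (big_pred1 h) => h' /=.
apply/andP/eqP => [[/eqP E1 /eqP E2]|->]; last by rewrite !eqxx.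
by apply: val_inj; apply: (W3 _ _ (ltn_ord h') (ltn_ord h)); rewrite ?E1 ?E2 ?add0n.
Qed.

Definition wtM (w : seq (sspider O n)) (M : nat) (f : nat -> nat) : R :=
  \prod_(h < M | (h < f h)%N) omega (legvec w h) (legvec w (f h)).

Definition glueM (w : seq (sspider O n)) (M : nat) (f : nat -> nat) : gdat O :=
  GD (size w) M (fun h => (leg_of w h).1) f
     (fun h => (h < f h)%N) (fun h => (leg_of w h).2)
     (fun j => existT _ (sm (nth (dflt O n) w j)) (so (nth (dflt O n) w j))).

Variables (W : lmodType R) (F : gdat O -> W).
Hypothesis respF : respects F.

Lemma psi_nE (w : seq (sspider O n)) M (e : nlegs w = M) :
  psi_n F w = \sum_(p : {ffun 'I_M -> 'I_M} | is_pairing p)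
                 wtM w M (natf p) *: F (glueM w M (natf p)).
Proof.
case: M / e; apply: eq_bigr => p _; congr (_ *: _).
by apply: eq_big => h; rewrite natfE.
Qed.


Definition rewire (f : nat -> nat) (ini : nat -> bool) : gdat O :=
  GD (gk X) N (gatt X) f ini (glab X) (gcol X).

Lemma wf_rewire (q : {ffun 'I_N -> 'I_N}) (ini : nat -> bool) : is_pairing q ->
  (forall h : 'I_N, ini (q h) = ~~ ini h) -> wf (rewire (natf q) ini).
Proof.
move=> /forallP Hq Hi; case: wfX => W1 W2 W3 W4; split => //=.
move=> h Hh; have [a1 _ _ _ _] := W1 h Hh.
have -> : h = Ordinal Hh by [].
rewrite !natfE; have /andP [ne /eqP iv] := Hq (Ordinal Hh).
by split => //; rewrite ?natfE ?iv ?Hi.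
Qed.

Definition Yq (q : {ffun 'I_N -> 'I_N}) : gdat O :=
  rewire (natf q) (fun k => (pn tau k < pn tau (natf q k))%N).

Lemma wf_Yq q : is_pairing q -> wf (Yq q).
Proof.
move=> Hq; apply: wf_rewire => // h; rewrite !natfE !pnE.
move/forallP: Hq => /(_ h) /andP [ne /eqP ->].
have ne' : nat_of_ord (tau (q h)) != nat_of_ord (tau h).
  by rewrite (inj_eq val_inj) (inj_eq perm_inj).
by move: ne'; lia.
Qed.

Definition conjq (q : {ffun 'I_N -> 'I_N}) : {ffun 'I_N -> 'I_N} :=
  [ffun k => tau (q ((tau^-1)%g k))].

Lemma conjqE q (h : 'I_N) : conjq q (tau h) = tau (q h).
Proof. by rewrite ffunE permK. Qed.

Lemma conjq_inj : injective conjq.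
Proof.
move=> q1 q2 E; apply/ffunP => h; apply: (@perm_inj _ tau).
by rewrite -!conjqE E.
Qed.

Lemma pairing_conj q : is_pairing (conjq q) = is_pairing q.
Proof.
apply/forallP/forallP => H h.
  by move: (H (tau h)); rewrite !conjqE !(inj_eq perm_inj).
by rewrite -(permKV tau h) !conjqE !(inj_eq perm_inj).
Qed.

Lemma transp_glue (s : {ffun 'I_N -> 'I_n * bool}) q :
  @transported _ _ (Yq q) (glueM (cut (X:=X) s) N (natf (conjq q))) 1 tau.
Proof.
split => //=.
- by rewrite size_map size_iota.
- move=> h Hh; rewrite pn_tau // leg_cut //= pn1.
  have -> : h = Ordinal Hh by [].
  rewrite -tauE !natfE conjqE pnE.
  by split.
- move=> v Hv; rewrite pn1 /cut (nth_map 0%N) ?size_iota // nth_iota //= add0n.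
  by case: (gcol X v).
Qed.

Lemma F_glue s q : is_pairing q ->
  F (glueM (cut (X:=X) s) N (natf (conjq q))) = F (Yq q).
Proof.
move=> Hq; have tr := transp_glue s q; have wY := wf_Yq Hq.
have wG := wf_transp wY tr.
by rewrite (resp_iso respF wY wG tr) odd_perm1 expr0 scale1r.
Qed.

Lemma wtM_cut (s : {ffun 'I_N -> 'I_n * bool}) q :
  wtM (cut (X:=X) s) N (natf (conjq q)) =
  \prod_(h | (tau h < tau (q h))%N) omega (bvec R (s h)) (bvec R (s (q h))).
Proof.
rewrite /wtM (reindex_inj (@perm_inj _ tau)) /=.
apply: eq_big => h; first by rewrite natfE conjqE.
by move=> _; rewrite natfE conjqE !tauE !legvec_cut.
Qed.

Lemma psi_cut (s : {ffun 'I_N -> 'I_n * bool}) :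
  psi_n F (cut (X:=X) s) = \sum_(q : {ffun 'I_N -> 'I_N} | is_pairing q)
    (\prod_(h | (tau h < tau (q h))%N) omega (bvec R (s h)) (bvec R (s (q h))))
      *: F (Yq q).
Proof.
rewrite (psi_nE (nlegs_cut s)) (reindex_inj conjq_inj) /=.
apply: eq_big => q; first exact: pairing_conj.
by move=> Hq; rewrite pairing_conj in Hq; rewrite wtM_cut F_glue.
Qed.

End Main.




Section Final.
Variables (R : realType) (O : cycSmod R) (n : nat) (X : gdat O).
Hypothesis wfX : wf X.
Local Notation N := (gh X).
Variables (W : lmodType R) (F : gdat O -> W).
Hypothesis respF : respects F.

Lemma mateoE (h : 'I_N) : nat_of_ord (mateo h) = gmate X h.
Proof.
rewrite /mateo val_insubd; case: wfX => W1 _ _ _; have [_ a2 _ _ _] := W1 h (ltn_ord h).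
by rewrite a2.
Qed.

Lemma mateoK : involutive (@mateo _ _ X).
Proof.
move=> h; apply: val_inj => /=; rewrite !mateoE.
by case: wfX => W1 _ _ _; have [_ _ _ a4 _] := W1 h (ltn_ord h).
Qed.

Lemma ginit_mateo (h : 'I_N) : ginit X (mateo h) = ~~ ginit X h.
Proof.
rewrite mateoE; by case: wfX => W1 _ _ _; have [_ _ _ _ a5] := W1 h (ltn_ord h).
Qed.

Lemma main : psi_phi n F X = M_n n F X.
Proof.
rewrite /psi_phi /M_n.
under eq_bigr => s _ do rewrite (psi_cut wfX respF) scaler_sumr.
rewrite exchange_big /=.
apply: eq_bigr => q Hq.
under eq_bigr => s _ do rewrite scalerA.
rewrite -scaler_suml.
pose I := fun h : 'I_N => ginit X h.
pose o := fun h : 'I_N => (tau wfX h < tau wfX (q h))%N.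
have qK : involutive (fun h => q h).
  by move=> h; move/forallP: Hq => /(_ h) /andP [_ /eqP].
have oq : forall h, o (q h) = ~~ o h.
  move=> h; rewrite /o qK.
  move/forallP: Hq => /(_ h) /andP [ne _].
  have ne' : nat_of_ord (tau wfX (q h)) != nat_of_ord (tau wfX h).
    by rewrite (inj_eq val_inj) (inj_eq perm_inj).
  by move: ne'; lia.
have -> : \sum_(i : {ffun 'I_N -> 'I_n * bool} | is_state i) stsign i *
     \prod_(h < N | (tau wfX h < tau wfX (q h))%N) omega (bvec R (i h)) (bvec R (i (q h)))
   = \sum_(s : {ffun 'I_N -> 'I_n * bool} | stP (@mateo _ _ X) s) summand R (fun h => q h) I o s.
  reflexivity.
case: pickP => [d Hd | Hn]; last first.
  rewrite scal_zero ?scale0r // => dd; by move: (Hn dd); rewrite /= /coherent => ->.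
have dm : forall h, d (mateo h) = ~~ d h.
  by move=> h; move/forallP: Hd => /(_ h) /andP [/eqP -> _].
have dq : forall h, d (q h) = ~~ d h.
  by move=> h; move/forallP: Hd => /(_ h) /andP [_ /eqP ->].
rewrite (scal_sum R n mateoK qK (I := I) ginit_mateo oq dm dq).
pose ini := fun h => match (insub h : option 'I_N) with Some j => d j | None => ginit X h end.
have iniE : forall h : 'I_N, ini h = d h by move=> h; rewrite /ini valK.
have wR : wf (rewire X (natf q) ini).
  by apply: wf_rewire => // h; rewrite !iniE dq.
have FF := flip_many respF (Y := Yq wfX q) (ini := ini) (wf_Yq wfX Hq) wR erefl.
change (F (reglue q d)) with (F (setinit (Yq wfX q) ini)); rewrite FF scalerA.
congr (_ *: _).
have Eb : #|[pred h : 'I_N | ginit (Yq wfX q) h && ~~ ini h]| = #|[pred h | o h && ~~ d h]|.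
  by apply: eq_card => h; rewrite !inE /= iniE natfE !pnE.
rewrite Eb /flipsign mulrA; congr (_ * _ * _).
Qed.
End Final.

Theorem proposition2p23 (R : realType) (O : cycSmod R) (n : nat) :
  (1 <= n)%N ->
  forall X : gdat O, wf X ->
  forall (W : lmodType R) (F : gdat O -> W), respects F ->
  psi_phi n F X = M_n n F X.
Proof.
move=> _ X wX W F rF; exact: (main n wX rF).
Qed.
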